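(* Let $r\ge1$, let $\mathbf s=(s_1,\dots,s_r)$ be a composition with $s_1>1$, and let $\xi=(\xi_1,\dots,\xi_r)\in\mathbb{C}^r$ and $\mathbf t=(t_1,\dots,t_r)$ satisfy condition (E). Then $\mathrm{Di}(\mathbf F_{\xi,\mathbf t};\mathbf s)=\alpha_0^1\big(x_0^{s_1-1}x_{1,\xi,\bar t_1}\,x_0^{s_2-1}x_{2,\xi,\bar t_2}\cdots x_0^{s_r-1}x_{r,\xi,\bar t_r}\big)$.
   Context: Colored Hurwitz polyzetas. For a composition $\mathbf s=(s_1,\dots,s_r)$ (positive integers), $\xi=(\xi_1,\dots,\xi_r)\in\mathbb{C}^r$ and real $\mathbf t=(t_1,\dots,t_r)$, set $\mathrm{Di}(\mathbf F_{\xi,\mathbf t};\mathbf s)=\sum_{n_1>\cdots>n_r>0}\frac{\xi_1^{n_1}\cdots\xi_r^{n_r}}{(n_1-t_1)^{s_1}\cdots(n_r-t_r)^{s_r}}$. Condition (E): for all $i$, $|\xi_1\xi_2\cdots\xi_i|\le 1$ and $t_i\in\,]-\infty,1[$. Differences of parameters. $\bar t_i=t_i-t_{i+1}$ for $1\le i<r$, and $\bar t_r=t_r$; thus $t_i=\bar t_i+\cdots+\bar t_r$. Letters and forms. The alphabet consists of $x_0$ and letters $x_{i,\xi,\tau}$ with $i\ge1$, $\xi$ a sequence of complex numbers and $\tau$ a real parameter. The associated differential forms are $\omega_0(z)=\frac{dz}{z}$ and $\omega_{i,\xi,\tau}(z)=\frac{\xi_1\cdots\xi_i}{1-\xi_1\cdots\xi_i\,z}\,\frac{dz}{z^{\tau}}$.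 Iterated integrals. For a word $w=y_1y_2\cdots y_k$ with associated forms $\omega^{(1)},\dots,\omega^{(k)}$, the Chen iterated integral along $[0,z]$ is defined recursively by $\alpha_0^z(1)=1$ and $\alpha_0^z(y_1y_2\cdots y_k)=\int_0^z\omega^{(1)}(z_1)\,\alpha_0^{z_1}(y_2\cdots y_k)$. *)

(* Defs.v *)
From Stdlib Require Import Reals Lra List.
Open Scope R_scope.

Definition Cx : Type := (R * R)%type.
Definition Cre (z : Cx) : R := fst z.
Definition Cim (z : Cx) : R := snd z.
Definition RtoC (x : R) : Cx := (x, 0).
Definition C0 : Cx := (0, 0).
Definition C1 : Cx := (1, 0).
Definition Cadd (z w : Cx) : Cx := (fst z + fst w, snd z + snd w).
Definition Copp (z : Cx) : Cx := (- fst z, - snd z).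
Definition Csub (z w : Cx) : Cx := Cadd z (Copp w).
Definition Cmul (z w : Cx) : Cx :=
  (fst z * fst w - snd z * snd w, fst z * snd w + snd z * fst w).
Definition Cscale (x : R) (z : Cx) : Cx := (x * fst z, x * snd z).
Definition Cinv (z : Cx) : Cx :=
  let d := fst z * fst z + snd z * snd z in (fst z / d, - snd z / d).
Definition Cdiv (z w : Cx) : Cx := Cmul z (Cinv w).
Definition Cmod (z : Cx) : R := sqrt (fst z * fst z + snd z * snd z).
Fixpoint Cpow (z : Cx) (n : nat) : Cx :=
  match n with O => C1 | S m => Cmul z (Cpow z m) end.

Fixpoint Cprod1 (xi : nat -> Cx) (i : nat) : Cx :=
  match i with O => C1 | S k => Cmul (Cprod1 xi k) (xi (S k)) end.

(** sum_{n=1}^{m-1} f n *)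
Fixpoint Csum_lt (f : nat -> Cx) (m : nat) : Cx :=
  match m with
  | O => C0
  | S k => match k with O => C0 | _ => Cadd (Csum_lt f k) (f k) end
  end.

Definition Cseq_cv (u : nat -> Cx) (L : Cx) : Prop :=
  forall eps : R, eps > 0 ->
    exists N : nat, forall n : nat, (n >= N)%nat -> Cmod (Csub (u n) L) < eps.

(** Indices are 1-based: s, xi, t are functions on nat, only 1..r matter.
    [Di_level d k m] = sum over m > n_k > n_{k+1} > ... > n_{k+d-1} > 0 of
    prod_{j} xi_j^{n_j} / (n_j - t_j)^{s_j}. *)
Definition Di_term (s : nat -> nat) (xi : nat -> Cx) (t : nat -> R)
  (k n : nat) : Cx :=
  Cscale (/ ((INR n - t k) ^ (s k))) (Cpow (xi k) n).

Fixpoint Di_level (s : nat -> nat) (xi : nat -> Cx) (t : nat -> R)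
  (d k m : nat) : Cx :=
  match d with
  | O => C1
  | S d' => Csum_lt (fun n => Cmul (Di_term s xi t k n)
                                   (Di_level s xi t d' (S k) n)) m
  end.

(** Partial sum over N >= n_1 > ... > n_r > 0. *)
Definition Di_partial (r : nat) (s : nat -> nat) (xi : nat -> Cx)
  (t : nat -> R) (N : nat) : Cx :=
  Di_level s xi t r 1 (S N).

(** Di(F_{xi,t}; s) = L : the multiple series converges (as N -> oo) to L. *)
Definition Di_is (r : nat) (s : nat -> nat) (xi : nat -> Cx) (t : nat -> R)
  (L : Cx) : Prop :=
  Cseq_cv (Di_partial r s xi t) L.

Definition condE (r : nat) (xi : nat -> Cx) (t : nat -> R) : Prop :=
  forall i : nat, (1 <= i <= r)%nat -> Cmod (Cprod1 xi i) <= 1 /\ t i < 1.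

Definition tbar (r : nat) (t : nat -> R) (i : nat) : R :=
  if Nat.ltb i r then t i - t (S i) else t r.

Inductive letter : Type :=
| x0 : letter
| xl : nat -> (nat -> Cx) -> R -> letter.

(** Coefficient of the form attached to a letter at a real point u in (0,1):
    omega_0(u) = du/u ;
    omega_{i,xi,tau}(u) = xi_1..xi_i / (1 - xi_1..xi_i u) du / u^tau. *)
Definition omega (y : letter) (u : R) : Cx :=
  match y with
  | x0 => RtoC (/ u)
  | xl i xi tau =>
      let P := Cprod1 xi i in
      Cscale (Rpower u (- tau)) (Cdiv P (Csub C1 (Cscale u P)))
  end.

Definition CRint (g : R -> Cx) (a b : R) (v : Cx) : Prop :=
  (exists pr : Riemann_integrable (fun u => fst (g u)) a b,
      RiemannInt pr = fst v) /\
  (exists pr : Riemann_integrable (fun u => snd (g u)) a b,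
      RiemannInt pr = snd v).

Definition CImpInt (g : R -> Cx) (z : R) (v : Cx) : Prop :=
  forall eps : R, eps > 0 -> exists delta : R, delta > 0 /\
    forall a b : R, 0 < a < delta -> z - delta < b < z -> a < b ->
      exists w : Cx, CRint g a b w /\ Cmod (Csub w v) < eps.

(** [iter_fun w F]: F(z) = alpha_0^z(w) for all z in ]0,1[ (Chen iterated
    integral along [0,z], defined recursively, each integral existing). *)
Fixpoint iter_fun (w : list letter) (F : R -> Cx) : Prop :=
  match w with
  | nil => forall z, 0 < z < 1 -> F z = C1
  | y :: w' => exists G : R -> Cx, iter_fun w' G /\
      forall z, 0 < z < 1 -> CImpInt (fun u => Cmul (omega y u) (G u)) z (F z)
  end.

Definition alpha01 (w : list letter) (L : Cx) : Prop :=
  match w with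
  | nil => L = C1
  | y :: w' => exists G : R -> Cx, iter_fun w' G /\
      CImpInt (fun u => Cmul (omega y u) (G u)) 1 L
  end.

Fixpoint word_from (r : nat) (s : nat -> nat) (xi : nat -> Cx) (t : nat -> R)
  (i d : nat) : list letter :=
  match d with
  | O => nil
  | S d' => repeat x0 (s i - 1) ++ (xl i xi (tbar r t i) :: nil)
            ++ word_from r s xi t (S i) d'
  end.

Definition Di_word (r : nat) (s : nat -> nat) (xi : nat -> Cx) (t : nat -> R)
  : list letter := word_from r s xi t 1 r.

(* Main.v *)
From Pilot Require Import Defs.
From Stdlib Require Import Reals List Lra Lia Psatz.
From Coquelicot Require Import Coquelicot.
Import Pilot.Defs.
Open Scope R_scope.

Lemma rad_le (a b : nat -> R) :
  (forall n, Rabs (a n) <= Rabs (b n)) -> Rbar_le (CV_radius b) (CV_radius a).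
Proof.
  intros H.
  refine (is_lub_Rbar_subset _ _ _ _ _ (CV_radius_bounded a) (CV_radius_bounded b)).
  intros x [M HM]. exists M. intros n.
  eapply Rle_trans; [|apply (HM n)].
  rewrite !Rabs_mult. apply Rmult_le_compat_r; [apply Rabs_pos|apply H].
Qed.

Lemma rad_const1 : CV_radius (fun _ => 1) = 1.
Proof.
  rewrite (CV_radius_finite_DAlembert _ 1).
  - f_equal. apply Rinv_1.
  - intros; lra.
  - lra.
  - apply is_lim_seq_ext with (fun _ => 1).
    + intros. unfold Rdiv. rewrite Rinv_1, Rmult_1_l, Rabs_R1. reflexivity.
    + apply is_lim_seq_const.
Qed.

Lemma rad_poly (a : nat -> R) (M : R) :
  (forall n, Rabs (a n) <= M * INR (S n)) -> Rbar_le 1 (CV_radius a).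
Proof.
  intros H.
  assert (Hb : CV_radius (fun n => (Rabs M + 1) * INR (S n)) = 1).
  { rewrite (CV_radius_ext _ (PS_scal (Rabs M + 1) (PS_derive (fun _ => 1)))).
    - rewrite CV_radius_scal.
      + rewrite CV_radius_derive. apply rad_const1.
      + pose proof (Rabs_pos M); lra.
    - intros n. unfold PS_scal, PS_derive, scal; simpl. unfold mult; simpl. ring. }
  rewrite <- Hb. apply rad_le.
  intros n. eapply Rle_trans; [apply H|].
  pose proof (pos_INR (S n)). pose proof (Rle_abs M).
  rewrite Rabs_mult. rewrite (Rabs_pos_eq (INR (S n))) by lra.
  rewrite (Rabs_pos_eq (Rabs M + 1)) by (pose proof (Rabs_pos M); lra).
  nra.
Qed.


Definition bdiv (t : R) (a : nat -> R) (n : nat) : R := / (INR (S n) - t) * a n.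
Definition Hf (t : R) (a : nat -> R) (u : R) : R := Rpower u (1 - t) * PSeries (bdiv t a) u.
Definition ff (t : R) (a : nat -> R) (u : R) : R := Rpower u (- t) * PSeries a u.

Lemma rad_lt (a : nat -> R) (x : R) :
  Rbar_le 1 (CV_radius a) -> Rabs x < 1 -> Rbar_lt (Rabs x) (CV_radius a).
Proof.
  intros H1 H2. destruct (CV_radius a) as [r| |]; simpl in *; lra.
Qed.

Lemma INRS_t (n : nat) (t : R) : t < 1 -> 1 - t <= INR (S n) - t.
Proof. intros. rewrite S_INR. pose proof (pos_INR n). lra. Qed.

Lemma rad_bdiv (t : R) (a : nat -> R) :
  t < 1 -> Rbar_le 1 (CV_radius a) -> Rbar_le 1 (CV_radius (bdiv t a)).
Proof.
  intros Ht Ha.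
  eapply Rbar_le_trans; [|apply (rad_le _ (PS_scal (/ (1 - t)) a))].
  - rewrite CV_radius_scal; [exact Ha|].
    apply Rinv_neq_0_compat; lra.
  - intros n. unfold bdiv, PS_scal.
    change (scal (/ (1 - t)) (a n)) with (/ (1 - t) * a n).
    rewrite !Rabs_mult. apply Rmult_le_compat_r; [apply Rabs_pos|].
    pose proof (INRS_t n t Ht).
    rewrite (Rabs_pos_eq (/ (INR (S n) - t))) by (left; apply Rinv_0_lt_compat; lra).
    rewrite (Rabs_pos_eq (/ (1 - t))) by (left; apply Rinv_0_lt_compat; lra).
    apply Rinv_le_contravar; lra.
Qed.

Lemma Rpower_cont (c x : R) : 0 < x -> continuity_pt (fun u => Rpower u c) x.
Proof.
  intros Hx. apply derivable_continuous_pt.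
  exists (c * Rpower x (c - 1)). apply derivable_pt_lim_power; exact Hx.
Qed.

Lemma Rpower_split (u t : R) : 0 < u -> Rpower u (1 - t) = u * Rpower u (- t).
Proof.
  intros Hu. replace (1 - t) with (1 + - t) by ring.
  rewrite Rpower_plus, Rpower_1 by exact Hu. reflexivity.
Qed.

Lemma Hderiv (t : R) (a : nat -> R) (x : R) :
  t < 1 -> Rbar_le 1 (CV_radius a) -> 0 < x < 1 ->
  is_derive (Hf t a) x (ff t a x).
Proof.
  intros Ht Ha Hx.
  pose proof (rad_bdiv t a Ht Ha) as Hb.
  assert (Hxr : Rabs x < 1) by (rewrite Rabs_pos_eq; lra).
  unfold Hf.
  eapply is_derive_ext.
  { intros u. reflexivity. }
  assert (D1 : is_derive (fun u => Rpower u (1 - t)) x ((1 - t) * Rpower x (- t))).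
  { apply is_derive_Reals. replace (- t) with (1 - t - 1) by ring.
    apply derivable_pt_lim_power; lra. }
  assert (D2 := is_derive_PSeries (bdiv t a) x (rad_lt _ _ Hb Hxr)).
  pose proof (is_derive_mult _ _ _ _ _ D1 D2 Rmult_comm) as D.
  simpl in D. unfold plus, mult in D; simpl in D.
  replace (ff t a x) with ((1 - t) * Rpower x (- t) * PSeries (bdiv t a) x +
            Rpower x (1 - t) * PSeries (PS_derive (bdiv t a)) x); [exact D|].
  unfold ff. rewrite Rpower_split by lra.
  (* x * PSeries (PS_derive b) x = PSeries (fun n => INR n * b n) x *)
  assert (E1 : x * PSeries (PS_derive (bdiv t a)) x =
               PSeries (PS_incr_1 (PS_derive (bdiv t a))) x).
  { rewrite PSeries_incr_1. reflexivity. }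
  assert (Hex1 : ex_pseries (bdiv t a) x) by (apply CV_radius_inside, rad_lt; auto).
  assert (Hex2 : ex_pseries (PS_incr_1 (PS_derive (bdiv t a))) x).
  { apply CV_radius_inside. rewrite CV_radius_incr_1, CV_radius_derive. apply rad_lt; auto. }
  assert (E2 : (1 - t) * PSeries (bdiv t a) x + PSeries (PS_incr_1 (PS_derive (bdiv t a))) x
               = PSeries a x).
  { rewrite <- PSeries_scal.
    rewrite <- PSeries_plus.
    - apply PSeries_ext. intros n. unfold PS_plus, PS_scal, PS_incr_1, PS_derive, bdiv.
      destruct n as [|n].
      + cbn -[INR]. change zero with 0. rewrite S_INR. simpl INR. field. lra.
      + cbn -[INR]. pose proof (INRS_t (S n) t Ht). rewrite (S_INR (S n)) in *.
        field. lra.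
    - apply ex_pseries_scal; [apply Rmult_comm|exact Hex1].
    - exact Hex2. }
  rewrite <- E2. rewrite <- E1. ring.
Qed.

Lemma Rpower_base1 (c : R) : Rpower 1 c = 1.
Proof. unfold Rpower. rewrite ln_1, Rmult_0_r, exp_0. reflexivity. Qed.

Lemma Rpower_pos (x c : R) : 0 < Rpower x c.
Proof. unfold Rpower. apply exp_pos. Qed.

Lemma Hint (t : R) (a : nat -> R) (x y : R) :
  t < 1 -> Rbar_le 1 (CV_radius a) -> 0 < x -> x < y -> y < 1 ->
  is_RInt (ff t a) x y (Hf t a y - Hf t a x).
Proof.
  intros Ht Ha Hx Hxy Hy.
  assert (E : Hf t a y - Hf t a x = minus (Hf t a y) (Hf t a x)) by reflexivity.
  rewrite E. apply (is_RInt_derive (Hf t a) (ff t a)).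
  - intros z Hz. rewrite Rmin_left, Rmax_right in Hz by lra.
    apply Hderiv; auto; lra.
  - intros z Hz. rewrite Rmin_left, Rmax_right in Hz by lra.
    apply continuity_pt_filterlim. unfold ff.
    apply continuity_pt_mult.
    + apply Rpower_cont; lra.
    + apply PSeries_continuity, rad_lt; auto. rewrite Rabs_pos_eq; lra.
Qed.

Lemma Hcont (t : R) (a : nat -> R) (z : R) :
  t < 1 -> Rbar_le 1 (CV_radius a) -> 0 < z < 1 -> continuity_pt (Hf t a) z.
Proof.
  intros Ht Ha Hz. unfold Hf. apply continuity_pt_mult.
  - apply Rpower_cont; lra.
  - apply PSeries_continuity, rad_lt.
    + apply rad_bdiv; auto.
    + rewrite Rabs_pos_eq; lra.
Qed.

Lemma cont_eps (f : R -> R) (z : R) : continuity_pt f z ->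
  forall eps, 0 < eps -> exists d, 0 < d /\ forall y, Rabs (y - z) < d -> Rabs (f y - f z) < eps.
Proof.
  intros H eps He. destruct (H eps He) as [d [Hd Hd2]].
  exists d. split; [lra|]. intros y Hy.
  destruct (Req_dec y z) as [->|Hne].
  - unfold Rminus. rewrite Rplus_opp_r, Rabs_R0. exact He.
  - apply (Hd2 y). split; [unfold D_x, no_cond; auto|exact Hy].
Qed.

Lemma Hlim0 (t : R) (a : nat -> R) :
  t < 1 -> Rbar_le 1 (CV_radius a) ->
  forall eps, 0 < eps -> exists d, 0 < d /\ forall x, 0 < x < d -> Rabs (Hf t a x) < eps.
Proof.
  intros Ht Ha eps He.
  assert (Hc : continuity_pt (PSeries (bdiv t a)) 0).
  { apply PSeries_continuity, rad_lt; [apply rad_bdiv; auto|rewrite Rabs_R0; lra]. }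
  destruct (cont_eps _ _ Hc 1 Rlt_0_1) as [d1 [Hd1 Hd1']].
  set (B := Rabs (PSeries (bdiv t a) 0) + 1).
  assert (HB : 0 < B) by (unfold B; pose proof (Rabs_pos (PSeries (bdiv t a) 0)); lra).
  set (x0 := Rpower (eps / B) (/ (1 - t))).
  assert (Hx0 : Rpower x0 (1 - t) = eps / B).
  { unfold x0. rewrite Rpower_mult. rewrite Rinv_l by lra. apply Rpower_1.
    apply Rdiv_lt_0_compat; lra. }
  exists (Rmin d1 x0). split.
  { apply Rmin_pos; [lra|apply Rpower_pos]. }
  intros x [Hx1 Hx2].
  assert (Hxd : x < d1) by (eapply Rlt_le_trans; [exact Hx2|apply Rmin_l]).
  assert (Hxx : x < x0) by (eapply Rlt_le_trans; [exact Hx2|apply Rmin_r]).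
  assert (Hp : Rpower x (1 - t) < eps / B).
  { rewrite <- Hx0. apply Rlt_Rpower_l; lra. }
  assert (Hq : Rabs (PSeries (bdiv t a) x) < B).
  { assert (Hq' := Hd1' x). rewrite Rminus_0_r, Rabs_pos_eq in Hq' by lra.
    specialize (Hq' Hxd). unfold B.
    pose proof (Rabs_triang_inv (PSeries (bdiv t a) x) (PSeries (bdiv t a) 0)). lra. }
  unfold Hf. rewrite Rabs_mult, (Rabs_pos_eq (Rpower x (1 - t))) by (left; apply Rpower_pos).
  pose proof (Rpower_pos x (1 - t)). pose proof (Rabs_pos (PSeries (bdiv t a) x)).
  replace eps with (eps / B * B) by (field; lra).
  apply Rle_lt_trans with (Rpower x (1 - t) * B).
  - apply Rmult_le_compat_l; lra.
  - apply Rmult_lt_compat_r; lra.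
Qed.

Lemma PS_left1 (b : nat -> R) :
  Rbar_le 1 (CV_radius b) -> ex_series (fun n => Rabs (b n)) ->
  forall eps, 0 < eps -> exists d, 0 < d /\ forall y, 1 - d < y < 1 ->
    Rabs (PSeries b y - PSeries b 1) < eps.
Proof.
  intros Hr Hs eps He.
  destruct (Rbar_le_lt_or_eq_dec 1 (CV_radius b) Hr) as [Hlt|Heq].
  - assert (Hc : continuity_pt (PSeries b) 1).
    { apply PSeries_continuity. rewrite Rabs_R1. exact Hlt. }
    destruct (cont_eps _ _ Hc eps He) as [d [Hd Hd']].
    exists d. split; auto. intros y Hy. apply Hd'. rewrite Rabs_left; lra.
  - assert (HA := Abel b).
    rewrite <- Heq in HA.
    assert (Hex : ex_pseries b 1).
    { apply ex_pseries_1. apply ex_series_Rabs. exact Hs. }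
    specialize (HA (ltac:(simpl; lra)) (ltac:(simpl; auto)) Hex).
    apply filterlim_locally with (eps := mkposreal eps He) in HA.
    destruct HA as [d Hd].
    exists d. split; [apply cond_pos|].
    intros y Hy. apply (Hd y); try lra.
    unfold ball; simpl. unfold AbsRing_ball; simpl. unfold abs, minus, plus, opp; simpl.
    rewrite Rabs_left; lra.
    exact (proj2 Hy).
Qed.

Lemma Hlim1 (t : R) (a : nat -> R) :
  t < 1 -> Rbar_le 1 (CV_radius a) -> ex_series (fun n => Rabs (bdiv t a n)) ->
  forall eps, 0 < eps -> exists d, 0 < d /\ forall y, 1 - d < y < 1 ->
    Rabs (Hf t a y - Series (bdiv t a)) < eps.
Proof.
  intros Ht Ha Hs eps He.
  set (S := Series (bdiv t a)).
  destruct (PS_left1 (bdiv t a) (rad_bdiv t a Ht Ha) Hs (Rmin 1 (eps / 2)))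
    as [d1 [Hd1 Hd1']].
  { apply Rmin_pos; lra. }
  rewrite PSeries_1 in Hd1'. fold S in Hd1'.
  set (e2 := eps / (2 * (Rabs S + 2))).
  assert (He2 : 0 < e2).
  { unfold e2. pose proof (Rabs_pos S). apply Rdiv_lt_0_compat; lra. }
  destruct (cont_eps _ _ (Rpower_cont (1 - t) 1 Rlt_0_1) e2 He2) as [d2 [Hd2 Hd2']].
  exists (Rmin d1 d2). split; [apply Rmin_pos; lra|].
  intros y [Hy1 Hy2].
  assert (Hyd1 : 1 - d1 < y) by (pose proof (Rmin_l d1 d2); lra).
  assert (Hyd2 : Rabs (y - 1) < d2) by (pose proof (Rmin_r d1 d2); rewrite Rabs_left; lra).
  specialize (Hd1' y (conj Hyd1 Hy2)). specialize (Hd2' y Hyd2).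
  rewrite Rpower_base1 in Hd2'.
  pose proof (Rmin_l 1 (eps / 2)). pose proof (Rmin_r 1 (eps / 2)).
  set (p := PSeries (bdiv t a) y) in *. set (q := Rpower y (1 - t)) in *.
  change (Rabs (q * p - S) < eps).
  replace (q * p - S) with ((q - 1) * p + (p - S)) by ring.
  assert (Hp : Rabs p <= Rabs S + 1).
  { pose proof (Rabs_triang_inv p S). lra. }
  eapply Rle_lt_trans; [apply Rabs_triang|]. rewrite Rabs_mult.
  assert (Hq : Rabs (q - 1) * Rabs p <= e2 * (Rabs S + 1)).
  { apply Rmult_le_compat; try apply Rabs_pos; lra. }
  assert (e2 * (Rabs S + 1) < eps / 2).
  { unfold e2. pose proof (Rabs_pos S).
    apply Rlt_le_trans with (eps / (2 * (Rabs S + 2)) * (Rabs S + 2)).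
    - apply Rmult_lt_compat_l; [exact He2|lra].
    - right. field. lra. }
  lra.
Qed.


Lemma Cmod_eq (z : Cx) : Cmod z = Complex.Cmod z.
Proof. unfold Cmod, Complex.Cmod. f_equal. ring. Qed.

Lemma Cmod_pos (z : Cx) : 0 <= Cmod z.
Proof. rewrite Cmod_eq. apply Cmod_ge_0. Qed.

Lemma Cmod_mul (a b : Cx) : Cmod (Cmul a b) = Cmod a * Cmod b.
Proof. rewrite !Cmod_eq. exact (Cmod_mult a b). Qed.

Lemma Cmod_add (a b : Cx) : Cmod (Cadd a b) <= Cmod a + Cmod b.
Proof. rewrite !Cmod_eq. exact (Cmod_triangle a b). Qed.

Lemma Cmod_C1 : Cmod C1 = 1.
Proof. rewrite Cmod_eq. exact Cmod_1. Qed.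

Lemma Cmod_C0 : Cmod C0 = 0.
Proof. unfold Cmod, C0; simpl. rewrite Rmult_0_l, Rplus_0_l. apply sqrt_0. Qed.

Lemma Cmod_scale (x : R) (z : Cx) : Cmod (Cscale x z) = Rabs x * Cmod z.
Proof.
  unfold Cmod, Cscale; simpl.
  rewrite <- sqrt_Rsqr_abs. rewrite <- sqrt_mult_alt by apply Rle_0_sqr.
  f_equal. unfold Rsqr. ring.
Qed.

Lemma Cmod_cpow (z : Cx) (n : nat) : Cmod (Cpow z n) = Cmod z ^ n.
Proof.
  induction n; simpl.
  - apply Cmod_C1.
  - rewrite Cmod_mul, IHn. reflexivity.
Qed.

Lemma Cmod_fst (z : Cx) : Rabs (fst z) <= Cmod z.
Proof.
  unfold Cmod. rewrite <- sqrt_Rsqr_abs. apply sqrt_le_1_alt.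
  unfold Rsqr. pose proof (Rle_0_sqr (snd z)). unfold Rsqr in *. lra.
Qed.

Lemma Cmod_snd (z : Cx) : Rabs (snd z) <= Cmod z.
Proof.
  unfold Cmod. rewrite <- sqrt_Rsqr_abs. apply sqrt_le_1_alt.
  unfold Rsqr. pose proof (Rle_0_sqr (fst z)). unfold Rsqr in *. lra.
Qed.

Lemma Cmod_le_sum (z : Cx) : Cmod z <= Rabs (fst z) + Rabs (snd z).
Proof.
  unfold Cmod. destruct z as [x y]; simpl.
  rewrite <- (sqrt_Rsqr (Rabs x + Rabs y)).
  - apply sqrt_le_1_alt. unfold Rsqr.
    pose proof (Rabs_pos x). pose proof (Rabs_pos y).
    assert (x * x = Rabs x * Rabs x) by (rewrite <- Rabs_mult, Rabs_pos_eq; nra).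
    assert (y * y = Rabs y * Rabs y) by (rewrite <- Rabs_mult, Rabs_pos_eq; nra).
    nra.
  - pose proof (Rabs_pos x). pose proof (Rabs_pos y). lra.
Qed.

Definition CPS (al : nat -> Cx) (u : R) : Cx :=
  (PSeries (fun n => fst (al n)) u, PSeries (fun n => snd (al n)) u).
Definition cdiv (t : R) (al : nat -> Cx) (n : nat) : Cx :=
  Cscale (/ (INR (S n) - t)) (al n).
Definition CSer (al : nat -> Cx) : Cx :=
  (Series (fun n => fst (al n)), Series (fun n => snd (al n))).

Lemma rad_fst (al : nat -> Cx) (M : R) :
  (forall n, Cmod (al n) <= M * INR (S n)) -> Rbar_le 1 (CV_radius (fun n => fst (al n))).
Proof.
  intros H. apply (rad_poly _ M). intros n. eapply Rle_trans; [apply Cmod_fst|apply H].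
Qed.

Lemma rad_snd (al : nat -> Cx) (M : R) :
  (forall n, Cmod (al n) <= M * INR (S n)) -> Rbar_le 1 (CV_radius (fun n => snd (al n))).
Proof.
  intros H. apply (rad_poly _ M). intros n. eapply Rle_trans; [apply Cmod_snd|apply H].
Qed.

Lemma RI_of (f g : R -> R) (a b v : R) :
  a < b -> (forall u, a <= u <= b -> g u = f u) -> is_RInt f a b v ->
  exists pr : Riemann_integrable g a b, RiemannInt pr = v.
Proof.
  intros Hab Hfg HI.
  assert (HI' : is_RInt g a b v).
  { apply (is_RInt_ext f). intros u Hu. rewrite Rmin_left, Rmax_right in Hu by lra.
    symmetry. apply Hfg. lra. exact HI. }
  assert (Hex : ex_RInt g a b) by (exists v; exact HI').
  exists (ex_RInt_Reals_0 _ _ _ Hex).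
  rewrite <- RInt_Reals. apply is_RInt_unique. exact HI'.
Qed.

Lemma cGL_gen (t : R) (al : nat -> Cx) (M : R) (g : R -> Cx) (z : R) (v : Cx) :
  t < 1 -> (forall n, Cmod (al n) <= M * INR (S n)) ->
  (forall u, 0 < u < 1 -> g u = Cscale (Rpower u (- t)) (CPS al u)) ->
  0 < z <= 1 ->
  (forall eps, 0 < eps -> exists d, 0 < d /\ forall y, z - d < y < z ->
     Rabs (Hf t (fun n => fst (al n)) y - fst v) < eps /\
     Rabs (Hf t (fun n => snd (al n)) y - snd v) < eps) ->
  CImpInt g z v.
Proof.
  intros Ht Hb Hg Hz Hlim eps He.
  set (a1 := fun n => fst (al n)). set (a2 := fun n => snd (al n)).
  assert (R1 : Rbar_le 1 (CV_radius a1)) by (apply (rad_fst al M Hb)).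
  assert (R2 : Rbar_le 1 (CV_radius a2)) by (apply (rad_snd al M Hb)).
  destruct (Hlim (eps / 4) ltac:(lra)) as [d1 [Hd1 Hd1']].
  destruct (Hlim0 t a1 Ht R1 (eps / 4) ltac:(lra)) as [d2 [Hd2 Hd2']].
  destruct (Hlim0 t a2 Ht R2 (eps / 4) ltac:(lra)) as [d3 [Hd3 Hd3']].
  exists (Rmin d1 (Rmin d2 d3)). split.
  { apply Rmin_pos; [lra|apply Rmin_pos; lra]. }
  intros x y Hx Hy Hxy.
  pose proof (Rmin_l d1 (Rmin d2 d3)). pose proof (Rmin_r d1 (Rmin d2 d3)).
  pose proof (Rmin_l d2 d3). pose proof (Rmin_r d2 d3).
  exists (Hf t a1 y - Hf t a1 x, Hf t a2 y - Hf t a2 x). split.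
  - split; simpl.
    + apply (RI_of (ff t a1)); [lra| |apply Hint; auto; lra].
      intros u Hu. rewrite Hg by lra. reflexivity.
    + apply (RI_of (ff t a2)); [lra| |apply Hint; auto; lra].
      intros u Hu. rewrite Hg by lra. reflexivity.
  - destruct (Hd1' y ltac:(lra)) as [E1 E2].
    assert (F1 := Hd2' x ltac:(lra)). assert (F2 := Hd3' x ltac:(lra)).
    eapply Rle_lt_trans; [apply Cmod_le_sum|]. simpl.
    fold a1 a2 in E1, E2.
    assert (Rabs (Hf t a1 y - Hf t a1 x + - fst v) < eps / 2).
    { replace (Hf t a1 y - Hf t a1 x + - fst v) with ((Hf t a1 y - fst v) + - Hf t a1 x) by ring.
      eapply Rle_lt_trans; [apply Rabs_triang|]. rewrite Rabs_Ropp. lra. }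
    assert (Rabs (Hf t a2 y - Hf t a2 x + - snd v) < eps / 2).
    { replace (Hf t a2 y - Hf t a2 x + - snd v) with ((Hf t a2 y - snd v) + - Hf t a2 x) by ring.
      eapply Rle_lt_trans; [apply Rabs_triang|]. rewrite Rabs_Ropp. lra. }
    lra.
Qed.

Lemma cGL_in (t : R) (al : nat -> Cx) (M : R) (g : R -> Cx) (z : R) :
  t < 1 -> (forall n, Cmod (al n) <= M * INR (S n)) ->
  (forall u, 0 < u < 1 -> g u = Cscale (Rpower u (- t)) (CPS al u)) ->
  0 < z < 1 ->
  CImpInt g z (Cscale (Rpower z (1 - t)) (CPS (cdiv t al) z)).
Proof.
  intros Ht Hb Hg Hz.
  apply (cGL_gen t al M); auto; [lra|].
  intros eps He.
  assert (C1' := Hcont t (fun n => fst (al n)) z Ht (rad_fst al M Hb) Hz).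
  assert (C2' := Hcont t (fun n => snd (al n)) z Ht (rad_snd al M Hb) Hz).
  destruct (cont_eps _ _ C1' eps He) as [d1 [Hd1 Hd1']].
  destruct (cont_eps _ _ C2' eps He) as [d2 [Hd2 Hd2']].
  exists (Rmin d1 d2). split; [apply Rmin_pos; lra|].
  intros y Hy. pose proof (Rmin_l d1 d2). pose proof (Rmin_r d1 d2).
  split.
  - apply Hd1'. rewrite Rabs_left; lra.
  - apply Hd2'. rewrite Rabs_left; lra.
Qed.

Lemma exs_fst (al : nat -> Cx) :
  ex_series (fun n => Cmod (al n)) -> ex_series (fun n => Rabs (fst (al n))).
Proof.
  intros H. apply (@ex_series_le R_AbsRing R_CompleteNormedModule _ (fun n => Cmod (al n))); auto.
  intros n. unfold norm; simpl. unfold abs; simpl. rewrite Rabs_Rabsolu. apply Cmod_fst.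
Qed.

Lemma exs_snd (al : nat -> Cx) :
  ex_series (fun n => Cmod (al n)) -> ex_series (fun n => Rabs (snd (al n))).
Proof.
  intros H. apply (@ex_series_le R_AbsRing R_CompleteNormedModule _ (fun n => Cmod (al n))); auto.
  intros n. unfold norm; simpl. unfold abs; simpl. rewrite Rabs_Rabsolu. apply Cmod_snd.
Qed.

Lemma cGL_1 (t : R) (al : nat -> Cx) (M : R) (g : R -> Cx) :
  t < 1 -> (forall n, Cmod (al n) <= M * INR (S n)) ->
  (forall u, 0 < u < 1 -> g u = Cscale (Rpower u (- t)) (CPS al u)) ->
  ex_series (fun n => Cmod (cdiv t al n)) ->
  CImpInt g 1 (CSer (cdiv t al)).
Proof.
  intros Ht Hb Hg Hs.
  apply (cGL_gen t al M); auto; [lra|].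
  intros eps He.
  destruct (Hlim1 t (fun n => fst (al n)) Ht (rad_fst al M Hb) (exs_fst _ Hs) eps He)
    as [d1 [Hd1 Hd1']].
  destruct (Hlim1 t (fun n => snd (al n)) Ht (rad_snd al M Hb) (exs_snd _ Hs) eps He)
    as [d2 [Hd2 Hd2']].
  exists (Rmin d1 d2). split; [apply Rmin_pos; lra|].
  intros y Hy. pose proof (Rmin_l d1 d2). pose proof (Rmin_r d1 d2).
  split.
  - apply Hd1'. lra.
  - apply Hd2'. lra.
Qed.


Lemma PS_lin4 (a1 a2 a3 a4 : nat -> R) (x1 x2 x3 x4 u : R) :
  ex_pseries a1 u -> ex_pseries a2 u -> ex_pseries a3 u -> ex_pseries a4 u ->
  PSeries (fun n => x1 * a1 n + x2 * a2 n + x3 * a3 n + x4 * a4 n) u =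
  x1 * PSeries a1 u + x2 * PSeries a2 u + x3 * PSeries a3 u + x4 * PSeries a4 u.
Proof.
  intros H1 H2 H3 H4.
  assert (E : forall n, x1 * a1 n + x2 * a2 n + x3 * a3 n + x4 * a4 n =
     PS_plus (PS_plus (PS_plus (PS_scal x1 a1) (PS_scal x2 a2)) (PS_scal x3 a3)) (PS_scal x4 a4) n)
    by (intros; reflexivity).
  rewrite (PSeries_ext _ _ _ E).
  assert (S1 : forall (x : R) (a : nat -> R), ex_pseries a u -> ex_pseries (PS_scal x a) u).
  { intros. apply ex_pseries_scal; [apply Rmult_comm|auto]. }
  rewrite !PSeries_plus; rewrite ?PSeries_scal; auto;
    repeat apply ex_pseries_plus; auto.
Qed.

Lemma Crec (P : Cx) (c g : nat -> Cx) (M u : R) :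
  (forall n, Cmod (c n) <= M * INR (S n)) ->
  (forall n, Cmod (g n) <= M * INR (S n)) ->
  0 <= u < 1 ->
  (forall n, c (S n) = Cadd (Cmul P (c n)) (Cmul P (g n))) ->
  CPS c u = Cadd (c 0%nat) (Cscale u (Cmul P (Cadd (CPS c u) (CPS g u)))).
Proof.
  intros Hc Hg Hu Hrec.
  assert (Hur : Rabs u < 1) by (rewrite Rabs_pos_eq; lra).
  assert (X1 : ex_pseries (fun n => fst (c n)) u) by (apply CV_radius_inside, rad_lt; auto; apply (rad_fst c M Hc)).
  assert (X2 : ex_pseries (fun n => snd (c n)) u) by (apply CV_radius_inside, rad_lt; auto; apply (rad_snd c M Hc)).
  assert (X3 : ex_pseries (fun n => fst (g n)) u) by (apply CV_radius_inside, rad_lt; auto; apply (rad_fst g M Hg)).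
  assert (X4 : ex_pseries (fun n => snd (g n)) u) by (apply CV_radius_inside, rad_lt; auto; apply (rad_snd g M Hg)).
  destruct P as [p1 p2].
  unfold CPS. unfold Cadd, Cscale, Cmul. simpl.
  f_equal.
  - rewrite (PSeries_decr_1 _ _ X1) at 1. f_equal. f_equal.
    unfold PS_decr_1.
    rewrite (PSeries_ext _ (fun n => p1 * fst (c n) + (- p2) * snd (c n) + p1 * fst (g n) + (- p2) * snd (g n))).
    + rewrite PS_lin4 by auto. ring.
    + intros n. rewrite Hrec. unfold Cadd, Cmul; simpl. ring.
  - rewrite (PSeries_decr_1 _ _ X2) at 1. f_equal. f_equal.
    unfold PS_decr_1.
    rewrite (PSeries_ext _ (fun n => p2 * fst (c n) + p1 * snd (c n) + p2 * fst (g n) + p1 * snd (g n))).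
    + rewrite PS_lin4 by auto. ring.
    + intros n. rewrite Hrec. unfold Cadd, Cmul; simpl. ring.
Qed.


Fixpoint Rsum_lt (f : nat -> R) (m : nat) : R :=
  match m with
  | O => 0
  | S k => match k with O => 0 | _ => Rsum_lt f k + f k end
  end.

Lemma Rsum_lt_S f m : (1 <= m)%nat -> Rsum_lt f (S m) = Rsum_lt f m + f m.
Proof. intros H. destruct m; [lia|reflexivity]. Qed.

Lemma Csum_lt_S f m : (1 <= m)%nat -> Csum_lt f (S m) = Cadd (Csum_lt f m) (f m).
Proof. intros H. destruct m; [lia|reflexivity]. Qed.

Lemma Cmod_Csum f m : Cmod (Csum_lt f m) <= Rsum_lt (fun n => Cmod (f n)) m.
Proof.
  induction m as [|m IH].
  - simpl. rewrite Cmod_C0. lra.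
  - destruct m as [|m].
    + simpl. rewrite Cmod_C0. lra.
    + rewrite Csum_lt_S, Rsum_lt_S by lia.
      eapply Rle_trans; [apply Cmod_add|]. lra.
Qed.

Lemma Rsum_lt_le f g m :
  (forall n, (1 <= n)%nat -> (n < m)%nat -> f n <= g n) -> Rsum_lt f m <= Rsum_lt g m.
Proof.
  induction m as [|m IH]; intros H.
  - simpl; lra.
  - destruct m as [|m].
    + simpl; lra.
    + rewrite (Rsum_lt_S f), (Rsum_lt_S g) by lia.
      assert (Rsum_lt f (S m) <= Rsum_lt g (S m)) by (apply IH; intros; apply H; lia).
      assert (f (S m) <= g (S m)) by (apply H; lia). lra.
Qed.

Lemma Rsum_lt_scal c f m : Rsum_lt (fun n => c * f n) m = c * Rsum_lt f m.
Proof.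
  induction m as [|m IH].
  - simpl; ring.
  - destruct m as [|m].
    + simpl; ring.
    + rewrite (Rsum_lt_S (fun n => c * f n)), (Rsum_lt_S f) by lia. rewrite IH. ring.
Qed.

Lemma Rsum_sqrt_aux m : Rsum_lt (fun n => / sqrt (INR n)) (S m) <= 2 * sqrt (INR m).
Proof.
  induction m as [|m IH].
  - simpl. rewrite sqrt_0. lra.
  - rewrite Rsum_lt_S by lia.
    set (x := sqrt (INR m)) in *. set (y := sqrt (INR (S m))).
    assert (Hx : 0 <= x) by apply sqrt_pos.
    assert (Hm : 0 <= INR m) by apply pos_INR.
    assert (Hy : 0 < y) by (apply sqrt_lt_R0; rewrite S_INR; lra).
    assert (Hx2 : x * x = INR m) by (apply sqrt_sqrt; lra).
    assert (Hy2 : y * y = INR m + 1) by (unfold y; rewrite sqrt_sqrt, S_INR; [lra|rewrite S_INR; lra]).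
    assert (H1 : 2 * x * y + 1 <= 2 * y * y) by nra.
    assert (H2 : / y * y = 1) by (apply Rinv_l; lra).
    assert (H3 : 2 * x + / y <= 2 * y).
    { apply (Rmult_le_reg_r y); [lra|]. rewrite Rmult_plus_distr_r.
      rewrite H2. nra. }
    lra.
Qed.

Lemma Rsum_sqrt m : Rsum_lt (fun n => / sqrt (INR n)) m <= 2 * sqrt (INR m).
Proof.
  eapply Rle_trans; [|apply Rsum_sqrt_aux].
  destruct m as [|m].
  - simpl; lra.
  - rewrite (Rsum_lt_S _ (S m)) by lia.
    assert (0 <= / sqrt (INR (S m))).
    { left. apply Rinv_0_lt_compat, sqrt_lt_R0. rewrite S_INR. pose proof (pos_INR m); lra. }
    lra.
Qed.

Lemma pow_le1 (a : R) (m : nat) : 0 <= a <= 1 -> a ^ m <= 1.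
Proof.
  intros H. induction m; simpl; [lra|].
  assert (0 <= a ^ m) by (apply pow_le; lra). nra.
Qed.

Lemma pow_le_mono (a : R) (n m : nat) : 0 <= a <= 1 -> (n <= m)%nat -> a ^ m <= a ^ n.
Proof.
  intros Ha Hnm. replace m with (n + (m - n))%nat by lia.
  rewrite pow_add. assert (0 <= a ^ n) by (apply pow_le; lra).
  assert (a ^ (m - n) <= 1) by (apply pow_le1; auto).
  assert (0 <= a ^ (m - n)) by (apply pow_le; lra). nra.
Qed.

Definition dlt (t : R) : R := Rmin 1 (1 - t).

Lemma dlt_pos t : t < 1 -> 0 < dlt t.
Proof. intros. unfold dlt. apply Rmin_pos; lra. Qed.

Lemma pow_lower (t x : R) (j : nat) :
  t < 1 -> 1 <= x -> x ^ j * dlt t ^ j <= (x - t) ^ j.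
Proof.
  intros Ht Hx.
  rewrite <- Rpow_mult_distr. apply pow_incr. split.
  - assert (0 < dlt t) by (apply dlt_pos; auto). nra.
  - unfold dlt. destruct (Rle_dec t 0).
    + pose proof (Rmin_l 1 (1 - t)). nra.
    + pose proof (Rmin_r 1 (1 - t)). pose proof (Rmin_l 1 (1 - t)).
      assert (0 < Rmin 1 (1 - t)) by (apply Rmin_pos; lra). nra.
Qed.

Lemma inv_pow_bound1 (t x : R) (j : nat) :
  t < 1 -> 1 <= x -> (1 <= j)%nat -> / ((x - t) ^ j) <= / (dlt t ^ j) * / x.
Proof.
  intros Ht Hx Hj.
  assert (Hd : 0 < dlt t ^ j) by (apply pow_lt, dlt_pos; auto).
  assert (Hxj : x <= x ^ j) by (rewrite <- (pow_1 x) at 1; apply Rle_pow; auto).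
  pose proof (pow_lower t x j Ht Hx).
  rewrite <- Rinv_mult. apply Rinv_le_contravar; [nra|]. nra.
Qed.

Lemma inv_pow_bound2 (t x : R) (j : nat) :
  t < 1 -> 1 <= x -> (2 <= j)%nat -> / ((x - t) ^ j) <= / (dlt t ^ j) * / (x * x).
Proof.
  intros Ht Hx Hj.
  assert (Hd : 0 < dlt t ^ j) by (apply pow_lt, dlt_pos; auto).
  assert (Hxj : x ^ 2 <= x ^ j) by (apply Rle_pow; auto).
  simpl in Hxj. rewrite Rmult_1_r in Hxj.
  pose proof (pow_lower t x j Ht Hx).
  rewrite <- Rinv_mult. apply Rinv_le_contravar.
  - apply Rmult_lt_0_compat; [lra|]. nra.
  - assert (0 <= (x ^ j - x * x) * dlt t ^ j) by (apply Rmult_le_pos; lra). nra.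
Qed.


Lemma sqrt_div (n : R) : 1 <= n -> / n * sqrt n = / sqrt n.
Proof.
  intros H. assert (Hs : 0 < sqrt n) by (apply sqrt_lt_R0; lra).
  rewrite <- (sqrt_sqrt n) at 1 by lra. field. lra.
Qed.

Lemma bound_D (r : nat) (s : nat -> nat) (xi : nat -> Cx) (t : nat -> R) :
  condE r xi t -> (forall i, (1 <= i <= r)%nat -> (1 <= s i)%nat) ->
  forall d k, (k + d = r)%nat -> (1 <= k)%nat ->
  exists C, 0 <= C /\ forall m, (1 <= m)%nat ->
    Cmod (Cprod1 xi k) ^ m * Cmod (Di_level s xi t d (S k) m) <= C * sqrt (INR m).
Proof.
  intros HE Hs d. induction d as [|d IH]; intros k Hk Hk1.
  - exists 1. split; [lra|]. intros m Hm. simpl Di_level. rewrite Cmod_C1, Rmult_1_r.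
    destruct (HE k ltac:(lia)) as [HP _].
    assert (Hpm : Cmod (Cprod1 xi k) ^ m <= 1) by (apply pow_le1; split; [apply Cmod_pos|auto]).
    assert (1 <= sqrt (INR m)).
    { rewrite <- sqrt_1. apply sqrt_le_1_alt. apply (le_INR 1). exact Hm. }
    lra.
  - destruct (IH (S k) ltac:(lia) ltac:(lia)) as [C' [HC' HCb]].
    destruct (HE k ltac:(lia)) as [HP _].
    destruct (HE (S k) ltac:(lia)) as [_ Ht].
    assert (Hj : (1 <= s (S k))%nat) by (apply Hs; lia).
    set (j := s (S k)) in *. set (tt := t (S k)) in *.
    set (K := / (dlt tt ^ j)).
    assert (HK : 0 < K) by (apply Rinv_0_lt_compat, pow_lt, dlt_pos; auto).
    exists (2 * C' * K). split; [nra|].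
    intros m Hm.
    change (Di_level s xi t (S d) (S k) m) with
      (Csum_lt (fun n => Cmul (Di_term s xi t (S k) n) (Di_level s xi t d (S (S k)) n)) m).
    set (f := fun n => Cmul (Di_term s xi t (S k) n) (Di_level s xi t d (S (S k)) n)).
    set (a := Cmod (Cprod1 xi k)).
    assert (Ha : 0 <= a <= 1) by (split; [apply Cmod_pos|exact HP]).
    assert (Ham : 0 <= a ^ m) by (apply pow_le; lra).
    apply Rle_trans with (a ^ m * Rsum_lt (fun n => Cmod (f n)) m).
    { apply Rmult_le_compat_l; [exact Ham|apply Cmod_Csum]. }
    rewrite <- Rsum_lt_scal.
    apply Rle_trans with (Rsum_lt (fun n => C' * K * / sqrt (INR n)) m).
    2: { rewrite Rsum_lt_scal.
         assert (Hsq := Rsum_sqrt m).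
         assert (0 <= C' * K) by nra. nra. }
    apply Rsum_lt_le. intros n Hn1 Hnm.
    assert (Hn : 1 <= INR n) by (apply (le_INR 1); exact Hn1).
    unfold f, Di_term. rewrite Cmod_mul, Cmod_scale, Cmod_cpow.
    fold j tt.
    assert (Hpos : 0 < INR n - tt) by lra.
    rewrite Rabs_pos_eq by (left; apply Rinv_0_lt_compat, pow_lt; exact Hpos).
    set (iv := / ((INR n - tt) ^ j)).
    assert (Hiv : 0 <= iv) by (left; apply Rinv_0_lt_compat, pow_lt; exact Hpos).
    assert (Hivb : iv <= K * / INR n) by (apply inv_pow_bound1; auto).
    set (b := Cmod (xi (S k))).
    assert (Hb : 0 <= b) by apply Cmod_pos.
    set (D := Cmod (Di_level s xi t d (S (S k)) n)).
    assert (HD : 0 <= D) by apply Cmod_pos.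
    assert (Hab : a * b = Cmod (Cprod1 xi (S k))).
    { simpl Cprod1. rewrite Cmod_mul. reflexivity. }
    assert (HC := HCb n Hn1). rewrite <- Hab in HC. rewrite Rpow_mult_distr in HC.
    fold D in HC.
    assert (Hamn : a ^ m <= a ^ n) by (apply pow_le_mono; auto; lia).
    assert (Hbn : 0 <= b ^ n) by (apply pow_le; auto).
    assert (Han : 0 <= a ^ n) by (apply pow_le; lra).
    apply Rle_trans with (iv * (a ^ n * b ^ n * D)).
    { assert (0 <= iv * b ^ n * D) by (apply Rmult_le_pos; [apply Rmult_le_pos|]; auto).
      nra. }
    apply Rle_trans with (K * / INR n * (C' * sqrt (INR n))).
    { apply Rmult_le_compat; auto.
      apply Rmult_le_pos; [apply Rmult_le_pos|]; auto. }
    rewrite <- (sqrt_div (INR n)) by exact Hn. lra.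
Qed.


Lemma ex_series_mono (a : nat -> R) (M : R) :
  (forall n, 0 <= a n) -> (forall n, sum_n a n <= M) -> ex_series a.
Proof.
  intros H0 HM.
  destruct (ex_finite_lim_seq_incr (sum_n a) M) as [l Hl].
  - intros n. rewrite sum_Sn. specialize (H0 (S n)). unfold plus; simpl. lra.
  - exact HM.
  - exists l. exact Hl.
Qed.

Lemma s32_step (N : R) : 0 <= N ->
  / ((N + 2) * sqrt (N + 2)) + 2 / sqrt (N + 2) <= 2 / sqrt (N + 1).
Proof.
  intros HN.
  set (x := sqrt (N + 1)). set (y := sqrt (N + 2)).
  assert (Hx : 0 < x) by (apply sqrt_lt_R0; lra).
  assert (Hy : 0 < y) by (apply sqrt_lt_R0; lra).
  assert (Hx2 : x * x = N + 1) by (apply sqrt_sqrt; lra).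
  assert (Hy2 : y * y = N + 2) by (apply sqrt_sqrt; lra).
  assert (Hk : x * (2 * y * y + 1) <= 2 * y * y * y).
  { assert (Hsq : (x * (2 * y * y + 1)) * (x * (2 * y * y + 1)) <= (2 * y * y * y) * (2 * y * y * y)).
    { replace ((x * (2 * y * y + 1)) * (x * (2 * y * y + 1))) with ((x * x) * (2 * y * y + 1) * (2 * y * y + 1)) by ring.
      rewrite Hx2. replace (N + 1) with (y * y - 1) by lra. nra. }
    assert (0 <= x * (2 * y * y + 1)) by nra.
    assert (0 <= 2 * y * y * y) by nra. nra. }
  rewrite <- Hy2.
  assert (E1 : / (y * y * y) + 2 / y = (2 * y * y + 1) / (y * y * y)) by (field; lra).
  rewrite E1.
  apply (Rmult_le_reg_r (x * (y * y * y))); [nra|].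
  replace ((2 * y * y + 1) / (y * y * y) * (x * (y * y * y))) with (x * (2 * y * y + 1)) by (field; lra).
  replace (2 / x * (x * (y * y * y))) with (2 * y * y * y) by (field; lra).
  exact Hk.
Qed.

Lemma ex_series_32 : ex_series (fun n => / (INR (S n) * sqrt (INR (S n)))).
Proof.
  apply (ex_series_mono _ 3).
  - intros n. left. apply Rinv_0_lt_compat. rewrite S_INR. pose proof (pos_INR n).
    assert (0 < sqrt (INR n + 1)) by (apply sqrt_lt_R0; lra). nra.
  - assert (H : forall N, sum_n (fun n => / (INR (S n) * sqrt (INR (S n)))) N <= 3 - 2 / sqrt (INR N + 1)).
    { induction N as [|N IH].
      + rewrite sum_O. simpl. rewrite Rplus_0_l, sqrt_1. lra.
      + rewrite sum_Sn. change plus with Rplus. cbv beta.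
        pose proof (pos_INR N).
        pose proof (s32_step (INR N) H).
        rewrite !S_INR.
        replace (INR N + 1 + 1) with (INR N + 2) by ring. lra. }
    intros N. specialize (H N).
    assert (0 < sqrt (INR N + 1)) by (apply sqrt_lt_R0; pose proof (pos_INR N); lra).
    assert (0 < 2 / sqrt (INR N + 1)) by (apply Rdiv_lt_0_compat; lra). lra.
Qed.

Definition cc (r : nat) (s : nat -> nat) (xi : nat -> Cx) (t : nat -> R) (k j n : nat) : Cx :=
  Cmul (Cscale (/ ((INR (S n) - t k) ^ j)) (Cpow (Cprod1 xi k) (S n)))
       (Di_level s xi t (r - k) (S k) (S n)).

Definition Fk (r : nat) (s : nat -> nat) (xi : nat -> Cx) (t : nat -> R) (k j : nat) (u : R) : Cx :=
  Cscale (Rpower u (1 - t k)) (CPS (cc r s xi t k j) u).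

Lemma cc_succ r s xi t k j n : t k < 1 ->
  cc r s xi t k (S j) n = cdiv (t k) (cc r s xi t k j) n.
Proof.
  intros Ht. unfold cc, cdiv. simpl pow.
  assert (0 < INR (S n) - t k) by (pose proof (INRS_t n (t k) Ht); lra).
  rewrite Rinv_mult.
  destruct (Cpow (Cprod1 xi k) (S n)) as [p1 p2].
  destruct (Di_level s xi t (r - k) (S k) (S n)) as [d1 d2].
  unfold Cmul, Cscale; simpl. f_equal; ring.
Qed.

Lemma sqrt_le_self (x : R) : 1 <= x -> sqrt x <= x.
Proof.
  intros H. assert (Hs : 1 <= sqrt x) by (rewrite <- sqrt_1; apply sqrt_le_1_alt; lra).
  rewrite <- (sqrt_sqrt x) at 2 by lra. nra.
Qed.

Lemma cc_bound r s xi t k :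
  condE r xi t -> (forall i, (1 <= i <= r)%nat -> (1 <= s i)%nat) ->
  (1 <= k <= r)%nat ->
  forall j, exists M, forall n, Cmod (cc r s xi t k j n) <= M * INR (S n).
Proof.
  intros HE Hs Hk j.
  destruct (bound_D r s xi t HE Hs (r - k) k ltac:(lia) ltac:(lia)) as [C [HC HCb]].
  destruct (HE k Hk) as [_ Ht].
  exists ((/ (1 - t k)) ^ j * C). intros n.
  unfold cc. rewrite Cmod_mul, Cmod_scale, Cmod_cpow.
  assert (Hx := INRS_t n (t k) Ht).
  assert (Hpos : 0 < INR (S n) - t k) by lra.
  rewrite Rabs_pos_eq by (left; apply Rinv_0_lt_compat, pow_lt; exact Hpos).
  assert (Hn : 1 <= INR (S n)) by (rewrite S_INR; pose proof (pos_INR n); lra).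
  specialize (HCb (S n) ltac:(lia)).
  assert (Hsq := sqrt_le_self _ Hn).
  assert (Hiv : / ((INR (S n) - t k) ^ j) <= (/ (1 - t k)) ^ j).
  { rewrite <- pow_inv. apply pow_incr. split.
    - left; apply Rinv_0_lt_compat; lra.
    - apply Rinv_le_contravar; lra. }
  assert (Hiv0 : 0 <= / ((INR (S n) - t k) ^ j)) by (left; apply Rinv_0_lt_compat, pow_lt; exact Hpos).
  assert (HA : 0 <= Cmod (Cprod1 xi k) ^ S n * Cmod (Di_level s xi t (r - k) (S k) (S n)))
    by (apply Rmult_le_pos; [apply pow_le, Cmod_pos|apply Cmod_pos]).
  rewrite (Rmult_assoc (/ ((INR (S n) - t k) ^ j))).
  apply Rle_trans with ((/ (1 - t k)) ^ j * (C * INR (S n))); [|right; ring].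
  apply Rmult_le_compat; auto.
  assert (C * sqrt (INR (S n)) <= C * INR (S n)) by (apply Rmult_le_compat_l; auto). lra.
Qed.

Lemma cc_sum1 r s xi t :
  condE r xi t -> (forall i, (1 <= i <= r)%nat -> (1 <= s i)%nat) -> (1 <= r)%nat ->
  (1 < s 1)%nat ->
  ex_series (fun n => Cmod (cc r s xi t 1%nat (s 1%nat) n)).
Proof.
  intros HE Hs Hr Hs1.
  destruct (bound_D r s xi t HE Hs (r - 1) 1 ltac:(lia) ltac:(lia)) as [C [HC HCb]].
  destruct (HE 1%nat ltac:(lia)) as [_ Ht].
  set (K := / (dlt (t 1%nat) ^ s 1%nat)).
  assert (HK : 0 < K) by (apply Rinv_0_lt_compat, pow_lt, dlt_pos; auto).
  apply (@ex_series_le R_AbsRing R_CompleteNormedModule _ (fun n => K * C * / (INR (S n) * sqrt (INR (S n))))).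
  2: { eapply ex_series_ext; [|apply (ex_series_scal_l (K * C)), ex_series_32]. intros; reflexivity. }
  intros n.
  change (Rabs (Cmod (cc r s xi t 1%nat (s 1%nat) n)) <= K * C * / (INR (S n) * sqrt (INR (S n)))).
  rewrite Rabs_pos_eq by apply Cmod_pos.
  unfold cc. rewrite Cmod_mul, Cmod_scale, Cmod_cpow.
  assert (Hx := INRS_t n (t 1%nat) Ht).
  assert (Hpos : 0 < INR (S n) - t 1%nat) by lra.
  rewrite Rabs_pos_eq by (left; apply Rinv_0_lt_compat, pow_lt; exact Hpos).
  assert (Hn : 1 <= INR (S n)) by (rewrite S_INR; pose proof (pos_INR n); lra).
  specialize (HCb (S n) ltac:(lia)).
  assert (Hiv := inv_pow_bound2 (t 1%nat) (INR (S n)) (s 1%nat) Ht Hn Hs1). fold K in Hiv.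
  assert (Hiv0 : 0 <= / ((INR (S n) - t 1%nat) ^ s 1%nat)) by (left; apply Rinv_0_lt_compat, pow_lt; exact Hpos).
  assert (HA : 0 <= Cmod (Cprod1 xi 1) ^ S n * Cmod (Di_level s xi t (r - 1) 2 (S n)))
    by (apply Rmult_le_pos; [apply pow_le, Cmod_pos|apply Cmod_pos]).
  rewrite (Rmult_assoc (/ ((INR (S n) - t 1%nat) ^ s 1%nat))).
  apply Rle_trans with (K * / (INR (S n) * INR (S n)) * (C * sqrt (INR (S n)))).
  { apply Rmult_le_compat; auto. }
  assert (Hs0 : 0 < sqrt (INR (S n))) by (apply sqrt_lt_R0; lra).
  right. set (q := sqrt (INR (S n))) in *.
  assert (Hq : INR (S n) = q * q) by (symmetry; apply sqrt_sqrt; lra).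
  rewrite Hq. field. lra.
Qed.


Lemma Cscale_eq (x : R) (z : Cx) : Cscale x z = Complex.Cmult (Complex.RtoC x) z.
Proof. destruct z as [a b]. unfold Cscale, Complex.Cmult, Complex.RtoC; simpl. f_equal; ring. Qed.

Lemma Cdiv_eq (a b : Cx) : Cdiv a b = Complex.Cdiv a b.
Proof.
  destruct a as [a1 a2]. destruct b as [b1 b2].
  unfold Cdiv, Cinv, Complex.Cdiv, Complex.Cinv, Cmul, Complex.Cmult; simpl.
  rewrite !Rmult_1_r. reflexivity.
Qed.

Lemma one_minus_nz (P : Cx) (u : R) : 0 <= u < 1 -> Cmod P <= 1 ->
  Complex.Cminus (Complex.RtoC 1) (Complex.Cmult (Complex.RtoC u) P) <> Complex.RtoC 0.
Proof.
  intros Hu HP Heq. destruct P as [p1 p2].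
  assert (H1 := f_equal fst Heq). simpl in H1.
  pose proof (Cmod_fst (p1, p2)). simpl in H.
  pose proof (Rle_abs p1).
  assert (u * p1 < 1).
  { destruct (Rle_dec 0 p1).
    - assert (p1 <= 1) by lra. nra.
    - nra. }
  lra.
Qed.


Open Scope C_scope.

Lemma alg_geo (P A : Cx) (u R1 : R) :
  (0 < u < 1)%R -> (Cmod P <= 1)%R ->
  A = Cadd P (Cscale u (Cmul P (Cadd A C0))) ->
  Cmul (Cscale R1 (Cdiv P (Csub C1 (Cscale u P)))) C1 = Cscale R1 A.
Proof.
  intros Hu HP H.
  rewrite !Cscale_eq, Cdiv_eq in *.
  change Cadd with Complex.Cplus in *. change Cmul with Complex.Cmult in *.
  change Csub with Complex.Cminus in *. change C1 with (Complex.RtoC 1) in *.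
  change C0 with (Complex.RtoC 0) in *.
  change Cx with Complex.C in *.
  assert (Hn := one_minus_nz P u ltac:(lra) HP).
  assert (E : A - Complex.RtoC u * P * A = P) by (rewrite H at 1; ring).
  assert (E2 : A = P / (1 - Complex.RtoC u * P)).
  { transitivity ((A - Complex.RtoC u * P * A) / (1 - Complex.RtoC u * P)).
    - field. exact Hn.
    - rewrite E. reflexivity. }
  rewrite E2. field. exact Hn.
Qed.

Lemma alg_xl (P A G : Cx) (u R1 R2 R3 : R) :
  (0 < u < 1)%R -> (Cmod P <= 1)%R -> (R1 * R2 = u * R3)%R ->
  A = Cadd C0 (Cscale u (Cmul P (Cadd A G))) ->
  Cmul (Cscale R1 (Cdiv P (Csub C1 (Cscale u P)))) (Cscale R2 G) = Cscale R3 A.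
Proof.
  intros Hu HP HR H.
  rewrite !Cscale_eq, Cdiv_eq in *.
  change Cadd with Complex.Cplus in *. change Cmul with Complex.Cmult in *.
  change Csub with Complex.Cminus in *. change C1 with (Complex.RtoC 1) in *.
  change C0 with (Complex.RtoC 0) in *.
  change Cx with Complex.C in *.
  assert (Hn := one_minus_nz P u ltac:(lra) HP).
  assert (E : A - Complex.RtoC u * P * A = Complex.RtoC u * P * G) by (rewrite H at 1; ring).
  assert (E2 : A = Complex.RtoC u * P * G / (1 - Complex.RtoC u * P)).
  { transitivity ((A - Complex.RtoC u * P * A) / (1 - Complex.RtoC u * P)).
    - field. exact Hn.
    - rewrite E. reflexivity. }
  rewrite E2.
  assert (HR' : Complex.RtoC R1 * Complex.RtoC R2 = Complex.RtoC u * Complex.RtoC R3).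
  { rewrite <- !RtoC_mult. f_equal. exact HR. }
  transitivity (Complex.RtoC R1 * Complex.RtoC R2 * (P * G / (1 - Complex.RtoC u * P))).
  { field. exact Hn. }
  rewrite HR'. field. exact Hn.
Qed.

Lemma alg_x0 (u c : R) (X : Cx) : (0 < u)%R ->
  Cmul (Defs.RtoC (/ u)) (Cscale (u * c) X) = Cscale c X.
Proof.
  intros Hu. destruct X as [a b]. unfold Cmul, Defs.RtoC, Cscale; simpl.
  f_equal; field; lra.
Qed.


Close Scope C_scope.
Open Scope R_scope.

Lemma CPS_ext (al be : nat -> Cx) (u : R) : (forall n, al n = be n) -> CPS al u = CPS be u.
Proof.
  intros H. unfold CPS. f_equal; apply PSeries_ext; intros n; rewrite H; reflexivity.
Qed.

Lemma Cpow_mul (a b : Cx) (n : nat) : Cpow (Cmul a b) n = Cmul (Cpow a n) (Cpow b n).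
Proof.
  induction n as [|n IH]; simpl.
  - unfold C1, Cmul; simpl. f_equal; ring.
  - rewrite IH. destruct a as [a1 a2]. destruct b as [b1 b2].
    destruct (Cpow (a1, a2) n) as [x1 x2]. destruct (Cpow (b1, b2) n) as [y1 y2].
    unfold Cmul; simpl. f_equal; ring.
Qed.

Lemma ring_rec (P Q Z X Y : Cx) (a : R) :
  Cmul (Cscale 1 (Cmul P Q)) (Cadd X (Cmul (Cscale a Z) Y)) =
  Cadd (Cmul P (Cmul (Cscale 1 Q) X)) (Cmul P (Cmul (Cscale a (Cmul Q Z)) Y)).
Proof.
  destruct P, Q, Z, X, Y. unfold Cmul, Cadd, Cscale; simpl. f_equal; ring.
Qed.

Lemma cc_top r s xi t n : cc r s xi t r 0 n = Cpow (Cprod1 xi r) (S n).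
Proof.
  unfold cc. rewrite Nat.sub_diag. simpl pow. rewrite Rinv_1.
  set (Q := Cpow (Cprod1 xi r) (S n)). destruct Q as [q1 q2].
  simpl Di_level. unfold Cmul, Cscale, C1; simpl. f_equal; ring.
Qed.

Lemma cc_low0 r s xi t k : (k < r)%nat -> cc r s xi t k 0 0 = C0.
Proof.
  intros Hk. unfold cc. replace (r - k)%nat with (S (r - S k)) by lia.
  simpl Di_level at 1. simpl Csum_lt.
  destruct (Cscale _ _) as [a b]. unfold Cmul, C0; simpl. f_equal; ring.
Qed.

Lemma cc_rec r s xi t k n : (k < r)%nat ->
  cc r s xi t k 0 (S n) =
  Cadd (Cmul (Cprod1 xi k) (cc r s xi t k 0 n))
       (Cmul (Cprod1 xi k) (cc r s xi t (S k) (s (S k)) n)).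
Proof.
  intros Hk. unfold cc.
  replace (r - k)%nat with (S (r - S k)) by lia.
  change (Di_level s xi t (S (r - S k)) (S k) (S (S n))) with
    (Csum_lt (fun m => Cmul (Di_term s xi t (S k) m) (Di_level s xi t (r - S k) (S (S k)) m)) (S (S n))).
  change (Di_level s xi t (S (r - S k)) (S k) (S n)) with
    (Csum_lt (fun m => Cmul (Di_term s xi t (S k) m) (Di_level s xi t (r - S k) (S (S k)) m)) (S n)).
  rewrite (Csum_lt_S _ (S n)) by lia.
  unfold Di_term at 2.
  change (Cprod1 xi (S k)) with (Cmul (Cprod1 xi k) (xi (S k))).
  rewrite Cpow_mul. simpl pow. rewrite !Rinv_1.
  change (Cpow (Cprod1 xi k) (S (S n))) with (Cmul (Cprod1 xi k) (Cpow (Cprod1 xi k) (S n))).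
  apply ring_rec.
Qed.

Lemma cc_top_rec r s xi t n :
  cc r s xi t r 0 (S n) = Cadd (Cmul (Cprod1 xi r) (cc r s xi t r 0 n)) (Cmul (Cprod1 xi r) C0).
Proof.
  rewrite !cc_top. change (Cpow (Cprod1 xi r) (S (S n))) with
    (Cmul (Cprod1 xi r) (Cpow (Cprod1 xi r) (S n))).
  destruct (Cprod1 xi r), (Cpow _ (S n)). unfold Cmul, Cadd, C0; simpl. f_equal; ring.
Qed.

Lemma tbar_lt r t k : (k < r)%nat -> tbar r t k = t k - t (S k).
Proof. intros H. unfold tbar. apply Nat.ltb_lt in H. rewrite H. reflexivity. Qed.

Lemma tbar_eq r t : tbar r t r = t r.
Proof. unfold tbar. rewrite Nat.ltb_irrefl. reflexivity. Qed.

Lemma bound_max (al be : nat -> Cx) (M1 M2 : R) :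
  (forall n, Cmod (al n) <= M1 * INR (S n)) -> (forall n, Cmod (be n) <= M2 * INR (S n)) ->
  (forall n, Cmod (al n) <= Rmax M1 M2 * INR (S n)) /\ (forall n, Cmod (be n) <= Rmax M1 M2 * INR (S n)).
Proof.
  intros H1 H2. split; intros n; pose proof (pos_INR (S n)).
  - eapply Rle_trans; [apply H1|]. apply Rmult_le_compat_r; [lra|apply Rmax_l].
  - eapply Rle_trans; [apply H2|]. apply Rmult_le_compat_r; [lra|apply Rmax_r].
Qed.


Lemma Fk_succ r s xi t k j z : t k < 1 ->
  Fk r s xi t k (S j) z = Cscale (Rpower z (1 - t k)) (CPS (cdiv (t k) (cc r s xi t k j)) z).
Proof.
  intros Ht. unfold Fk. f_equal. apply CPS_ext. intros n. apply cc_succ. exact Ht.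
Qed.

Lemma iterB r s xi t k :
  condE r xi t -> (forall i, (1 <= i <= r)%nat -> (1 <= s i)%nat) -> (1 <= k <= r)%nat ->
  forall m w, iter_fun (xl k xi (tbar r t k) :: w) (Fk r s xi t k 1) ->
  iter_fun (repeat x0 m ++ xl k xi (tbar r t k) :: w) (Fk r s xi t k (S m)).
Proof.
  intros HE Hs Hk m. induction m as [|m IH]; intros w H.
  - simpl. exact H.
  - simpl. exists (Fk r s xi t k (S m)). split; [apply IH; exact H|].
    intros z Hz.
    destruct (cc_bound r s xi t k HE Hs Hk (S m)) as [M HM].
    destruct (HE k Hk) as [_ Ht].
    rewrite Fk_succ by exact Ht.
    apply (cGL_in (t k) (cc r s xi t k (S m)) M); auto.
    intros u Hu. simpl omega. unfold Fk. rewrite Rpower_split by lra. apply alg_x0; lra.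
Qed.

Lemma M_nonneg (al : nat -> Cx) (M : R) : (forall n, Cmod (al n) <= M * INR (S n)) -> 0 <= M.
Proof.
  intros H. specialize (H 0%nat). simpl INR in H. pose proof (Cmod_pos (al 0%nat)). lra.
Qed.

Lemma CPS_zero u : CPS (fun _ => C0) u = C0.
Proof. unfold CPS, C0; simpl. rewrite PSeries_const_0. reflexivity. Qed.

Lemma Cmul_C1_r (z : Cx) : Cmul z C1 = z.
Proof. destruct z. unfold Cmul, C1; simpl. f_equal; ring. Qed.

Lemma Cmul_C1_l (z : Cx) : Cmul C1 z = z.
Proof. destruct z. unfold Cmul, C1; simpl. f_equal; ring. Qed.

Lemma iterA r s xi t :
  condE r xi t -> (forall i, (1 <= i <= r)%nat -> (1 <= s i)%nat) ->
  forall d k, (k + d = r)%nat -> (1 <= k)%nat ->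
  iter_fun (xl k xi (tbar r t k) :: word_from r s xi t (S k) d) (Fk r s xi t k 1).
Proof.
  intros HE Hs d. induction d as [|d IH]; intros k Hkd Hk1.
  - assert (k = r) by lia. subst k. simpl word_from.
    exists (fun _ => C1). split; [simpl; intros; reflexivity|].
    intros z Hz.
    destruct (cc_bound r s xi t r HE Hs ltac:(lia) 0) as [M HM].
    destruct (HE r ltac:(lia)) as [HP Ht].
    rewrite Fk_succ by exact Ht.
    apply (cGL_in (t r) (cc r s xi t r 0) M); auto.
    intros u Hu. unfold omega. rewrite tbar_eq.
    assert (HM0 := M_nonneg _ _ HM).
    assert (HA := Crec (Cprod1 xi r) (cc r s xi t r 0) (fun _ => C0) M u HM
      ltac:(intros n; cbv beta; rewrite Cmod_C0; apply Rmult_le_pos; [lra|apply pos_INR])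
      ltac:(lra) (cc_top_rec r s xi t)).
    rewrite CPS_zero in HA. rewrite cc_top in HA. simpl Cpow in HA. rewrite Cmul_C1_r in HA.
    apply alg_geo; auto.
  - pose proof (IH (S k) ltac:(lia) ltac:(lia)) as IHk.
    simpl word_from.
    exists (Fk r s xi t (S k) (s (S k))). split.
    + replace (Fk r s xi t (S k) (s (S k))) with (Fk r s xi t (S k) (S (s (S k) - 1))).
      2: { f_equal. assert (1 <= s (S k))%nat by (apply Hs; lia). lia. }
      apply iterB; [exact HE|exact Hs|lia|exact IHk].
    + intros z Hz.
      destruct (cc_bound r s xi t k HE Hs ltac:(lia) 0) as [M1 HM1].
      destruct (cc_bound r s xi t (S k) HE Hs ltac:(lia) (s (S k))) as [M2 HM2].
      destruct (bound_max _ _ _ _ HM1 HM2) as [HB1 HB2].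
      destruct (HE k ltac:(lia)) as [HP Ht].
      rewrite Fk_succ by exact Ht.
      apply (cGL_in (t k) (cc r s xi t k 0) (Rmax M1 M2)); auto.
      intros u Hu. unfold omega. rewrite tbar_lt by lia.
      assert (HA := Crec (Cprod1 xi k) (cc r s xi t k 0) (cc r s xi t (S k) (s (S k)))
        (Rmax M1 M2) u HB1 HB2 ltac:(lra) (fun n => cc_rec r s xi t k n ltac:(lia))).
      rewrite cc_low0 in HA by lia.
      unfold Fk.
      apply alg_xl; auto.
      rewrite <- Rpower_plus. rewrite <- Rpower_split by lra. f_equal. ring.
Qed.


Lemma Csum_pair (f : nat -> Cx) (N : nat) :
  Csum_lt f (S (S N)) =
  (sum_f_R0 (fun n => fst (f (S n))) N, sum_f_R0 (fun n => snd (f (S n))) N).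
Proof.
  induction N as [|N IH].
  - simpl. destruct (f 1%nat). unfold Cadd, C0; simpl. f_equal; ring.
  - change (Csum_lt f (S (S (S N)))) with (Cadd (Csum_lt f (S (S N))) (f (S (S N)))).
    rewrite IH. simpl sum_f_R0. reflexivity.
Qed.

Lemma Di_is_main r s xi t :
  condE r xi t -> (forall i, (1 <= i <= r)%nat -> (1 <= s i)%nat) -> (1 <= r)%nat ->
  (1 < s 1%nat)%nat ->
  Di_is r s xi t (CSer (cc r s xi t 1%nat (s 1%nat))).
Proof.
  intros HE Hs Hr Hs1.
  assert (HS := cc_sum1 r s xi t HE Hs Hr Hs1).
  set (c := cc r s xi t 1%nat (s 1%nat)) in *.
  assert (Hf : forall n, Cmul (Di_term s xi t 1 (S n)) (Di_level s xi t (r - 1) 2 (S n)) = c n).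
  { intros n. unfold c, cc, Di_term. simpl Cprod1. rewrite Cmul_C1_l. reflexivity. }
  destruct r as [|r']; [lia|].
  replace (S r' - 1)%nat with r' in Hf by lia.
  assert (S1 := Series_correct _ (ex_series_Rabs _ (exs_fst _ HS))).
  assert (S2 := Series_correct _ (ex_series_Rabs _ (exs_snd _ HS))).
  apply is_series_Reals in S1. apply is_series_Reals in S2.
  intros eps He.
  destruct (S1 (eps / 2) ltac:(lra)) as [N1 HN1].
  destruct (S2 (eps / 2) ltac:(lra)) as [N2 HN2].
  exists (S (max N1 N2)). intros N HN.
  destruct N as [|N']; [lia|].
  unfold Di_partial.
  change (Di_level s xi t (S r') 1 (S (S N'))) with
    (Csum_lt (fun n => Cmul (Di_term s xi t 1 n) (Di_level s xi t r' 2 n)) (S (S N'))).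
  rewrite Csum_pair.
  rewrite (sum_eq _ (fun n => fst (c n))) by (intros i _; rewrite Hf; reflexivity).
  rewrite (sum_eq (fun n => snd (Cmul (Di_term s xi t 1 (S n)) (Di_level s xi t r' 2 (S n))))
             (fun n => snd (c n))) by (intros i _; rewrite Hf; reflexivity).
  specialize (HN1 N' ltac:(lia)). specialize (HN2 N' ltac:(lia)).
  unfold R_dist in HN1, HN2.
  eapply Rle_lt_trans; [apply Cmod_le_sum|].
  unfold CSer, Csub, Cadd, Copp. cbn [fst snd]. unfold Rminus in *. lra.
Qed.

Theorem mainTheorem7 (r : nat) (s : nat -> nat) (xi : nat -> Cx) (t : nat -> R) :
  (1 <= r)%nat ->
  (forall i : nat, (1 <= i <= r)%nat -> (1 <= s i)%nat) ->
  (1 < s 1)%nat ->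
  condE r xi t ->
  exists L : Cx, Di_is r s xi t L /\ alpha01 (Di_word r s xi t) L.
Proof.
  intros Hr Hs Hs1 HE.
  exists (CSer (cc r s xi t 1%nat (s 1%nat))). split.
  - apply Di_is_main; auto.
  - unfold Di_word. destruct r as [|r']; [lia|].
    simpl word_from.
    replace (s 1%nat - 1)%nat with (S (s 1%nat - 2)) by lia.
    simpl repeat. simpl app.
    exists (Fk (S r') s xi t 1%nat (S (s 1%nat - 2))). split.
    + apply iterB; [exact HE|exact Hs|lia|].
      apply (iterA (S r') s xi t HE Hs r' 1%nat); lia.
    + destruct (cc_bound (S r') s xi t 1%nat HE Hs ltac:(lia) (S (s 1%nat - 2))) as [M HM].
      destruct (HE 1%nat ltac:(lia)) as [_ Ht].
      assert (E : CSer (cc (S r') s xi t 1%nat (s 1%nat)) =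
                  CSer (cdiv (t 1%nat) (cc (S r') s xi t 1%nat (S (s 1%nat - 2))))).
      { unfold CSer. set (j := (s 1%nat - 2)%nat).
        assert (Hj : s 1%nat = S (S j)) by (unfold j; lia). rewrite Hj.
        f_equal; apply Series_ext; intros n; rewrite cc_succ by exact Ht; reflexivity. }
      rewrite E.
      apply (cGL_1 (t 1%nat) _ M); auto.
      * intros u Hu. simpl omega. unfold Fk. rewrite Rpower_split by lra. apply alg_x0; lra.
      * eapply ex_series_ext; [|apply (cc_sum1 (S r') s xi t HE Hs Hr Hs1)].
        intros n. set (j := (s 1%nat - 2)%nat).
        assert (Hj : s 1%nat = S (S j)) by (unfold j; lia). rewrite Hj.
        rewrite cc_succ by exact Ht. reflexivity.
Qed.
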